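(* Let $q\ge2$, $N=2^q$, $b>0$, $h=b/N$, and let $A_q=h^2B_h$, where $B_h=(b_{i,j})_{i,j=1}^{N-1}$ is the symmetric Toeplitz matrix with $b_{i,i}=\frac{2N}3-1$, $b_{i,j}=\frac N6-1$ if $|i-j|=1$, and $b_{i,j}=-1$ if $|i-j|\ge2$. Let $D_q$ be the diagonal of $A_q$, let $\eta_0$ satisfy $\lambda_{\max}(D_q^{-1}A_q)\le\eta_0<3$, let $0<\omega<2/\eta_0$, let $0<\eta\le\omega(2-\omega\eta_0)$, and let $K_q=I-\omega D_q^{-1}A_q$. Then $\|K_q\nu\|_{A_q}^2\le\|\nu\|_{A_q}^2-\eta\|A_q\nu\|_{D_q^{-1}}^2$ for all $\nu\in\mathbb R^{N-1}$, and $$\|K_qT^q\|_{A_q}\le\sqrt{1-\eta/4}<1.$$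
   Context: For a symmetric positive definite $M$, $\|\nu\|_M=\sqrt{\nu^TM\nu}$ and for a matrix $X$, $\|X\|_M$ is the induced operator norm. The restriction $I_q^{q-1}:\mathbb R^{N-1}\to\mathbb R^{N/2-1}$ is $(I_q^{q-1}\nu)_i=\frac14(\nu_{2i-1}+2\nu_{2i}+\nu_{2i+1})$, the prolongation is $I_{q-1}^q=2(I_q^{q-1})^T$, the coarse matrix is $A_{q-1}=I_q^{q-1}A_qI_{q-1}^q$, and $T^q=I-I_{q-1}^qA_{q-1}^{-1}I_q^{q-1}A_q$. $K_q$ is the damped Jacobi iteration matrix and $K_qT^q$ the two-grid iteration matrix. $A_q$ is the piecewise linear finite element stiffness matrix of the nonlocal operator $u\mapsto\int_0^b[u(x)-u(y)]dy$ with zero exterior condition. *)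

(* Defs.v *)
From HB Require Import structures.
From mathcomp Require Import all_boot all_order all_algebra.
From mathcomp Require Import boolp classical_sets reals.
Set Implicit Arguments. Unset Strict Implicit. Unset Printing Implicit Defensive.
Import Order.TTheory GRing.Theory Num.Theory.
Local Open Scope ring_scope.
Local Open Scope classical_set_scope.

(* Indices i : 'I_n are 0-based: paper index = i + 1. *)

Section Defs.
Variable R : realType.

Definition mnorm n (M : 'M[R]_n) (v : 'cV[R]_n) : R :=
  Num.sqrt ((v^T *m M *m v) 0 0).

Definition opnorm n (M X : 'M[R]_n) : R :=
  sup [set r | exists v : 'cV[R]_n, v != 0 /\ r = mnorm M (X *m v) / mnorm M v].

Definition Bh (q : nat) : 'M[R]_(2 ^ q - 1) :=
  let N : R := (2 ^ q)%:R in
  \matrix_(i, j) (if i == j then 2 * N / 3 - 1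
                  else if (i.+1 == j :> nat) || (j.+1 == i :> nat) then N / 6 - 1
                  else -1).

Definition Aq (q : nat) (b : R) : 'M[R]_(2 ^ q - 1) :=
  (b / (2 ^ q)%:R) ^+ 2 *: Bh q.

Definition diagpart n (A : 'M[R]_n) : 'M[R]_n := \matrix_(i, j) (if i == j then A i j else 0).

(* restriction I_q^{q-1} : R^{N-1} -> R^{N/2-1},
   (I nu)_i = 1/4 (nu_{2i-1} + 2 nu_{2i} + nu_{2i+1}) (1-based) *)
Definition restr (q : nat) : 'M[R]_(2 ^ q.-1 - 1, 2 ^ q - 1) :=
  \matrix_(i, j) (if (j == (2 * i)%N :> nat) then 1 / 4
                  else if (j == (2 * i).+1 :> nat) then 1 / 2
                  else if (j == (2 * i).+2 :> nat) then 1 / 4 else 0).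

Definition prol (q : nat) : 'M[R]_(2 ^ q - 1, 2 ^ q.-1 - 1) := 2 *: (restr q)^T.

Definition Acoarse (q : nat) (b : R) : 'M[R]_(2 ^ q.-1 - 1) :=
  restr q *m Aq q b *m prol q.

Definition Tq (q : nat) (b : R) : 'M[R]_(2 ^ q - 1) :=
  1%:M - prol q *m invmx (Acoarse q b) *m restr q *m Aq q b.

Definition Kq (q : nat) (b omega : R) : 'M[R]_(2 ^ q - 1) :=
  1%:M - omega *: (invmx (diagpart (Aq q b)) *m Aq q b).

End Defs.

(* Main.v *)
Require Import Defs.
From HB Require Import structures.
From mathcomp Require Import all_boot all_order all_algebra.
From mathcomp Require Import boolp classical_sets reals.
From mathcomp Require Import ring lra zify.
Import Order.TTheory GRing.Theory Num.Theory.
Local Open Scope ring_scope.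

Section Pure.
Variable R : realType.

Lemma sumrDx (I : Type) (r : seq I) (P : pred I) (F1 F2 : I -> R) :
  \sum_(i <- r | P i) (F1 i + F2 i) = \sum_(i <- r | P i) F1 i + \sum_(i <- r | P i) F2 i.
Proof. exact: big_split. Qed.

Definition gg (p q : R) := p ^+ 2 + p * q + q ^+ 2.

Lemma sum_pair (f : nat -> R) K :
  \sum_(0 <= k < 2 * K) f k = \sum_(0 <= i < K) (f (2 * i)%N + f (2 * i).+1).
Proof.
elim: K => [|K IH]; first by rewrite !big_geq.
have -> : (2 * K.+1 = (2 * K).+2)%N by lia.
rewrite big_nat_recr // big_nat_recr // IH.
by rewrite [in RHS]big_nat_recr //= addrA.
Qed.

Lemma le_sum_term (F : nat -> R) m n j :
  (forall k, 0 <= F k) -> (m <= j < n)%N -> F j <= \sum_(m <= k < n) F k.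
Proof.
move=> F0; elim: n => [|n IH]; first by lia.
move=> Hj; have Hmn : (m <= n)%N by lia.
rewrite big_nat_recr //=.
case: (ltnP j n) => Hjn.
  have := IH ltac:(lia); have := F0 n; lra.
have -> : j = n by lia.
have : 0 <= \sum_(m <= k < n) F k by apply: sumr_ge0.
lra.
Qed.

Lemma key_pure (K : nat) (x : nat -> R) : (0 < K)%N -> x 0%N = 0 -> x (2 * K)%N = 0 ->
  let N : R := (2 * K)%:R in
  let Q1 := \sum_(0 <= k < (2 * K).+1) x k ^+ 2 in
  let Q2 := \sum_(0 <= k < 2 * K) x k * x k.+1 in
  let S := \sum_(0 <= k < (2 * K).+1) x k in
  let qB := N / 6 * (4 * Q1 + 2 * Q2) - S ^+ 2 in
  (2 * N / 3) * \sum_(0 <= i < K) (x (2 * i).+1 - (x (2 * i)%N + x (2 * i).+2) / 2) ^+ 2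
     <= 4 * qB
  /\ forall j, (0 < j < 2 * K)%N -> N / 12 * x j ^+ 2 <= qB.
Proof.
move=> K0 x0 xN N Q1 Q2 S qB.
have N0 : 0 < N by rewrite /N ltr0n; lia.
pose mu := S / N.
pose v k := x k - mu.
pose G := \sum_(0 <= k < 2 * K) gg (v k) (v k.+1).
have Q1a : \sum_(0 <= k < 2 * K) x k ^+ 2 = Q1.
  by rewrite /Q1 big_nat_recr //= xN expr0n /= addr0.
have Q1b : \sum_(0 <= k < 2 * K) x k.+1 ^+ 2 = Q1.
  by rewrite /Q1 big_nat_recl //= x0 expr0n /= add0r.
have Sa : \sum_(0 <= k < 2 * K) x k = S.
  by rewrite /S big_nat_recr //= xN addr0.
have Sb : \sum_(0 <= k < 2 * K) x k.+1 = S.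
  by rewrite /S big_nat_recl //= x0 add0r.
have HG : qB = N / 3 * G.
  have -> : G = \sum_(0 <= k < 2 * K) (x k ^+ 2 + x k.+1 ^+ 2 + x k * x k.+1
                 - 3 * mu * x k - 3 * mu * x k.+1 + 3 * mu ^+ 2).
    by apply: eq_bigr => k _; rewrite /gg /v; ring.
  rewrite !sumrDx ?sumrB ?sumrN -!mulr_sumr sumr_const_nat subn0 -mulr_natr Q1a Q1b Sa Sb -/Q2 -/N.
  rewrite /qB /mu.
  have -> : N^-1 *+ (2 * K) = N^-1 * N by rewrite /N mulr_natr.
  field; apply/eqP; lra.
have HGp : G = \sum_(0 <= i < K) (gg (v (2 * i)%N) (v (2 * i).+1) + gg (v (2 * i).+1) (v (2 * i).+2)).
  by rewrite /G sum_pair.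
split.
  have : \sum_(0 <= i < K) (x (2 * i).+1 - (x (2 * i)%N + x (2 * i).+2) / 2) ^+ 2 <= 2 * G.
    rewrite HGp mulr_sumr; apply: ler_sum => i _.
    set p := v (2 * i)%N; set y := v (2 * i).+1; set q := v (2 * i).+2.
    have -> : x (2 * i).+1 - (x (2 * i)%N + x (2 * i).+2) / 2 = y - (p + q) / 2.
      by rewrite /y /p /q /v; field.
    have E : 2 * (gg p y + gg y q) - (y - (p + q) / 2) ^+ 2
             = 3 * ((p + q) / 2 + y) ^+ 2 + 4 * ((p - q) / 2) ^+ 2.
      by rewrite /gg; field.
    have : 0 <= 3 * ((p + q) / 2 + y) ^+ 2 + 4 * ((p - q) / 2) ^+ 2.
      by apply: addr_ge0; apply: mulr_ge0 => //; apply: sqr_ge0.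
    lra.
  move=> H; rewrite HG.
  have : 2 * N / 3 * \sum_(0 <= i < K) (x (2 * i).+1 - (x (2 * i)%N + x (2 * i).+2) / 2) ^+ 2
         <= 2 * N / 3 * (2 * G).
    by apply: ler_wpM2l => //; apply: divr_ge0 => //; apply: mulr_ge0 => //; apply: ltW.
  have -> : 2 * N / 3 * (2 * G) = 4 * (N / 3 * G) by field.
  by [].
move=> j Hj.
have H1 : \sum_(0 <= k < 2 * K) v k ^+ 2 <= 2 * G.
  rewrite /G mulr_sumr; apply: ler_sum => k _.
  have : 0 <= (v k + v k.+1) ^+ 2 + v k.+1 ^+ 2 by apply: addr_ge0; apply: sqr_ge0.
  rewrite /gg; nra.
have H2 : v 0%N ^+ 2 + v j ^+ 2 <= \sum_(0 <= k < 2 * K) v k ^+ 2.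
  rewrite big_ltn; last by lia.
  apply: lerD => //; apply: (le_sum_term (fun k => v k ^+ 2)); last by lia.
  by move=> k; apply: sqr_ge0.
have H3 : x j ^+ 2 <= 2 * (v 0%N ^+ 2 + v j ^+ 2).
  have -> : x j = v j - v 0%N by rewrite /v x0; ring.
  have := sqr_ge0 (v j + v 0%N); nra.
rewrite HG.
have : x j ^+ 2 <= 4 * G by lra.
move=> H4.
have -> : N / 12 * x j ^+ 2 = N / 3 * (x j ^+ 2 / 4) by field.
apply: ler_wpM2l; first by apply: divr_ge0 => //; apply: ltW.
lra.
Qed.
End Pure.
Set Implicit Arguments. Unset Strict Implicit. Unset Printing Implicit Defensive.
Section BF.
Variable R : realType.
Definition bf {p n} (M : 'M[R]_(p, n)) (u : 'cV[R]_p) (v : 'cV[R]_n) : R := (u^T *m M *m v) 0 0.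
Variables p n : nat.
Implicit Types (M : 'M[R]_(p, n)).

Lemma bfDl M (u w : 'cV_p) (v : 'cV_n) : bf M (u + w) v = bf M u v + bf M w v.
Proof. by rewrite /bf linearD /= !mulmxDl mxE. Qed.
Lemma bfDr M (u w : 'cV_n) (v : 'cV_p) : bf M v (u + w) = bf M v u + bf M v w.
Proof. by rewrite /bf !mulmxDr mxE. Qed.
Lemma bfZl M a (u : 'cV_p) (v : 'cV_n) : bf M (a *: u) v = a * bf M u v.
Proof. by rewrite /bf linearZ /= -!scalemxAl mxE. Qed.
Lemma bfZr M a (v : 'cV_n) (u : 'cV_p) : bf M u (a *: v) = a * bf M u v.
Proof. by rewrite /bf -!scalemxAr mxE. Qed.
Lemma bfNl M (u : 'cV_p) (v : 'cV_n) : bf M (- u) v = - bf M u v.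
Proof. by rewrite -scaleN1r bfZl mulN1r. Qed.
Lemma bfNr M (u : 'cV_n) (v : 'cV_p) : bf M v (- u) = - bf M v u.
Proof. by rewrite -scaleN1r bfZr mulN1r. Qed.
Lemma bfBl M (u w : 'cV_p) (v : 'cV_n) : bf M (u - w) v = bf M u v - bf M w v.
Proof. by rewrite bfDl bfNl. Qed.
Lemma bfBr M (u w : 'cV_n) (v : 'cV_p) : bf M v (u - w) = bf M v u - bf M v w.
Proof. by rewrite bfDr bfNr. Qed.
Lemma bf_sym (M : 'M[R]_n) (u v : 'cV_n) : M^T = M -> bf M u v = bf M v u.
Proof.
move=> HM; rewrite /bf.
have <- : (u^T *m M *m v)^T = v^T *m M *m u by rewrite !trmx_mul trmxK HM mulmxA.
by rewrite [RHS]mxE.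
Qed.
Lemma bf_mulr k M (N : 'M_(n, k)) (u : 'cV_p) v : bf M u (N *m v) = bf (M *m N) u v.
Proof. by rewrite /bf !mulmxA. Qed.
Lemma bf_mull k M (N : 'M_(p, k)) u (v : 'cV_n) : bf M (N *m u) v = bf (N^T *m M) u v.
Proof. by rewrite /bf trmx_mul !mulmxA. Qed.
Lemma bf1E (u v : 'cV_n) : bf 1%:M u v = \sum_i u i 0 * v i 0.
Proof. by rewrite /bf mulmx1 mxE; apply: eq_bigr => i _; rewrite mxE. Qed.
Lemma bf1_ge0 (u : 'cV_n) : 0 <= bf 1%:M u u.
Proof. by rewrite bf1E; apply: sumr_ge0 => i _; rewrite -expr2; apply: sqr_ge0. Qed.
Lemma bf1_term (u : 'cV_n) i : u i 0 ^+ 2 <= bf 1%:M u u.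
Proof.
rewrite bf1E (bigD1 i) //= -expr2 lerDl; apply: sumr_ge0 => j _; rewrite -expr2; apply: sqr_ge0.
Qed.
Lemma bf_scalar a (u v : 'cV_n) : bf a%:M u v = a * bf 1%:M u v.
Proof. by rewrite /bf mul_mx_scalar mulmx1 -scalemxAl mxE. Qed.
Lemma bfE M u v : bf M u v = \sum_i \sum_j u i 0 * M i j * v j 0.
Proof.
rewrite /bf mxE [RHS]exchange_big /=; apply: eq_bigr => j _; rewrite mxE mulr_suml; apply: eq_bigr => i _.
by rewrite !mxE.
Qed.
Lemma bf1_eq0 (u : 'cV_n) : bf 1%:M u u = 0 -> u = 0.
Proof.
move=> H; apply/matrixP => i j; rewrite (ord1 j) mxE.
have := bf1_term u i; rewrite H => Hle.
have : u i 0 ^+ 2 = 0 by apply/eqP; rewrite eq_le Hle sqr_ge0.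
by move/eqP; rewrite sqrf_eq0 => /eqP.
Qed.
Lemma bf0l M (v : 'cV_n) : bf M 0 v = 0.
Proof. by rewrite /bf linear0 !mul0mx mxE. Qed.
Lemma bf0r M (v : 'cV_p) : bf M v 0 = 0.
Proof. by rewrite /bf mulmx0 mxE. Qed.
Lemma bf0M (u : 'cV_p) (v : 'cV_n) : bf 0 u v = 0.
Proof. by rewrite /bf mulmx0 mul0mx mxE. Qed.
Lemma bfMB (M1 M2 : 'M[R]_(p, n)) u v : bf (M1 - M2) u v = bf M1 u v - bf M2 u v.
Proof. rewrite /bf mulmxBr mulmxBl; set X := u^T *m M1 *m v; set Y := u^T *m M2 *m v; by rewrite !mxE. Qed.
Lemma bfMZ a (M1 : 'M[R]_(p, n)) u v : bf (a *: M1) u v = a * bf M1 u v.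
Proof. by rewrite /bf -scalemxAr -scalemxAl mxE. Qed.
End BF.

Section Abstract.
Variable R : realType.
Variables (n m : nat) (A : 'M[R]_n) (Rm : 'M[R]_(m, n)) (d eta0 omega eta : R).
Hypothesis HAs : A^T = A.
Hypothesis HApsd : forall v, 0 <= bf A v v.
Hypothesis HApd : forall v, bf A v v = 0 -> v = 0.
Hypothesis Hd : 0 < d.
Hypothesis HD : diagpart A = d%:M.
Hypothesis Happrox : forall e : 'cV[R]_n, exists c : 'cV[R]_m,
  d * bf 1%:M (e - (2 *: Rm^T) *m c) (e - (2 *: Rm^T) *m c) <= 4 * bf A e e.
Hypothesis Hinj : forall c : 'cV[R]_m, Rm^T *m c = 0 -> c = 0.
Hypothesis n0 : (0 < n)%N.
Hypothesis Heig : forall lam : R, eigenvalue (invmx (diagpart A) *m A) lam -> lam <= eta0.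
Hypothesis Hom : 0 < omega.
Hypothesis Heta : 0 < eta.
Hypothesis Heta2 : eta <= omega * (2 - omega * eta0).

Lemma bf_ub : exists C : R, forall v : 'cV[R]_n, bf A v v <= C * bf 1%:M v v.
Proof.
exists (\sum_i \sum_j `|A i j|) => v.
rewrite bfE mulr_suml; apply: ler_sum => i _; rewrite mulr_suml; apply: ler_sum => j _.
have Hi := bf1_term v i; have Hj := bf1_term v j.
have H1 : v i 0 * A i j * v j 0 <= `|A i j| * (`|v i 0| * `|v j 0|).
  rewrite (mulrC (v i 0)) -mulrA; apply: (le_trans (ler_norm _)).
  by rewrite normrM normrM.
apply: (le_trans H1); apply: ler_wpM2l => //.
have : `|v i 0| * `|v j 0| <= (`|v i 0| ^+ 2 + `|v j 0| ^+ 2) / 2.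
  have := sqr_ge0 (`|v i 0| - `|v j 0|); lra.
rewrite !real_normK ?num_real //; lra.
Qed.

Lemma bf1_gt0 (v : 'cV[R]_n) : v != 0 -> 0 < bf 1%:M v v.
Proof.
move=> nz; rewrite lt_def bf1_ge0 andbT; apply/eqP => H; move: nz.
by rewrite (bf1_eq0 H) eqxx.
Qed.

Lemma diagA (i : 'I_n) : A i i = d.
Proof.
have := congr1 (fun M : 'M[R]_n => M i i) HD; rewrite /= !mxE eqxx /=.
by move=> ->.
Qed.

Lemma Dinv : invmx (diagpart A) = d^-1%:M.
Proof. by rewrite HD invmx_scalar. Qed.

Lemma rayleigh : 1 <= eta0 /\ forall w : 'cV[R]_n, bf A w w <= eta0 * d * bf 1%:M w w.
Proof.
pose E := [set r : R | exists v : 'cV[R]_n, v != 0 /\ r = bf A v v / bf 1%:M v v]%classic.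
have [C HC] := bf_ub.
have ubE : has_ubound E.
  exists C => r [v [nz ->]]; rewrite ler_pdivrMr ?bf1_gt0 //; exact: HC.
pose lam := sup E.
have Hlam : forall v : 'cV[R]_n, bf A v v <= lam * bf 1%:M v v.
  move=> v; have [->|nz] := eqVneq v 0; first by rewrite !bf0l mulr0.
  rewrite -ler_pdivrMr ?bf1_gt0 //; apply: ub_le_sup => //; by exists v.
pose i0 : 'I_n := Ordinal n0.
pose dl : 'cV[R]_n := delta_mx i0 0.
have Hdl1 : bf 1%:M dl dl = 1.
  by rewrite /bf mulmx1 /dl trmx_delta mul_delta_mx mxE !eqxx.
have HdlA : bf A dl dl = d.
  by rewrite /bf /dl trmx_delta -rowE -colE !mxE diagA.
have dl0 : dl != 0.
  by apply/eqP => H; move: Hdl1; rewrite H bf0l => /eqP; rewrite eq_sym oner_eq0.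
have Ene : (E !=set0)%classic by exists (bf A dl dl / bf 1%:M dl dl), dl.
have dlam : d <= lam.
  have := Hlam dl; rewrite HdlA Hdl1 mulr1 //.
pose M := lam%:M - A.
have HMs : M^T = M by rewrite /M linearB /= tr_scalar_mx HAs.
have HMpsd : forall v, 0 <= bf M v v.
  by move=> v; rewrite /M bfMB bf_scalar; have := Hlam v; lra.
have HMnu : ~~ (M \in unitmx).
  apply/negP => uM.
  pose Mi := invmx M.
  pose C2 := \sum_i \sum_j `|Mi i j| + 1.
  have C2p : 0 < C2.
    rewrite /C2 ltr_pwDr //; apply: sumr_ge0 => i _; apply: sumr_ge0 => j _; exact: normr_ge0.
  have HMi : forall x : 'cV[R]_n, bf Mi x x <= (C2 - 1) * bf 1%:M x x.
    move=> x; rewrite /C2 addrK bfE mulr_suml; apply: ler_sum => i _; rewrite mulr_suml; apply: ler_sum => j _.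
    have Hi := bf1_term x i; have Hj := bf1_term x j.
    have H1 : x i 0 * Mi i j * x j 0 <= `|Mi i j| * (`|x i 0| * `|x j 0|).
      rewrite (mulrC (x i 0)) -mulrA; apply: (le_trans (ler_norm _)).
      by rewrite normrM normrM.
    apply: (le_trans H1); apply: ler_wpM2l => //.
    have : `|x i 0| * `|x j 0| <= (`|x i 0| ^+ 2 + `|x j 0| ^+ 2) / 2.
      have := sqr_ge0 (`|x i 0| - `|x j 0|); lra.
    rewrite !real_normK ?num_real //; lra.
  have Hq : forall x : 'cV[R]_n, bf 1%:M x x <= C2 * bf M x x.
    move=> x; pose y := Mi *m x.
    have My : M *m y = x by rewrite /y /Mi mulKVmx.
    have := HMpsd (y - C2 *: x).
    rewrite !bfBl !bfBr !bfZl !bfZr.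
    have E1 : bf M x y = bf 1%:M x x by rewrite -{3}My bf_mulr mul1mx.
    have E2 : bf M y x = bf 1%:M x x by rewrite bf_sym // E1.
    have E3 : bf M y y = bf Mi x x.
      have -> : bf M y y = bf 1%:M y (M *m y) by rewrite bf_mulr mul1mx.
      rewrite My bf_sym; last by rewrite trmx1.
      by rewrite /y bf_mulr mul1mx.
    rewrite E1 E2 E3 => H.
    have := HMi x; have := bf1_ge0 x; have := HMpsd x.
    move=> h1 h2 h3.
    have : C2 * bf 1%:M x x <= C2 * (C2 * bf M x x).
      have := HMi x; lra.
    move=> h4; rewrite -(ler_pM2l C2p); nra.
  have : lam <= lam - C2^-1.
    apply: ge_sup => // r [v [nz ->]].
    rewrite ler_pdivrMr ?bf1_gt0 //.
    have := Hq v; rewrite /M bfMB bf_scalar.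
    have := bf1_gt0 nz; move=> h0 h1.
    have : C2^-1 * bf 1%:M v v <= C2^-1 * (C2 * (lam * bf 1%:M v v - bf A v v)).
      by apply: ler_wpM2l => //; rewrite invr_ge0 ltW.
    rewrite mulrA mulVf ?gt_eqF // mul1r; lra.
  have : 0 < C2^-1 by rewrite invr_gt0.
  lra.
have : \det M == 0 by move: HMnu; rewrite unitmxE unitfE negbK.
move/det0P => [v nzv vM].
have HvA : v *m A = lam *: v.
  by move: vM; rewrite /M mulmxBr mul_mx_scalar => /eqP; rewrite subr_eq0 => /eqP <-.
have Hev : eigenvalue (invmx (diagpart A) *m A) (lam / d).
  apply/eigenvalueP; exists v => //.
  by rewrite Dinv mul_scalar_mx -scalemxAr HvA scalerA mulrC.
have := Heig Hev; rewrite ler_pdivrMr // => Hl.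
split.
  have : d <= eta0 * d by lra.
  by rewrite -{1}(mul1r d) ler_pM2r.
move=> w; have [->|nz] := eqVneq w 0; first by rewrite !bf0l mulr0.
apply: (le_trans (Hlam w)); apply: ler_wpM2r; first exact: bf1_ge0.
exact: Hl.
Qed.

Lemma eta_le1 : eta <= 1.
Proof.
have [H1 _] := rayleigh.
have h : 0 <= (omega * eta0 - 1) ^+ 2 by apply: sqr_ge0.
have h2 : 0 <= (eta0 - 1) * eta.
  apply: mulr_ge0; [by rewrite subr_ge0 | exact: ltW].
have h3 : eta0 * eta <= eta0 * (omega * (2 - omega * eta0)) by apply: ler_wpM2l => //; lra.
have E : eta0 * (omega * (2 - omega * eta0)) = 1 - (omega * eta0 - 1) ^+ 2 by ring.
have E2 : (eta0 - 1) * eta = eta0 * eta - eta by ring.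
lra.
Qed.

Let K := 1%:M - omega *: (invmx (diagpart A) *m A).

Lemma Kv (v : 'cV[R]_n) : K *m v = v - (omega / d) *: (A *m v).
Proof.
by rewrite /K mulmxBl mul1mx Dinv mul_scalar_mx -!scalemxAl scalerA.
Qed.

Lemma part1 (v : 'cV[R]_n) :
  bf A (K *m v) (K *m v) <= bf A v v - eta * (d^-1 * bf 1%:M (A *m v) (A *m v)).
Proof.
have [H1 Hr] := rayleigh.
rewrite Kv !bfBl !bfBr !bfZl !bfZr.
set w := A *m v.
have E1 : bf A v w = bf 1%:M w w.
  by rewrite /w bf_mull mulmx1 HAs.
have E2 : bf A w v = bf 1%:M w w by rewrite bf_sym // E1.
rewrite E1 E2.
set W := bf 1%:M w w.
have W0 : 0 <= W by apply: bf1_ge0.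
have HA := Hr w.
set t := omega / d.
have Ht : t * d = omega by rewrite /t mulrVK ?unitfE ?gt_eqF.
have HA2 : t * (t * bf A w w) <= t * (t * (eta0 * d * W)).
  have t0 : 0 <= t by rewrite /t divr_ge0 // ltW.
  by apply: ler_wpM2l => //; apply: ler_wpM2l.
have Hdi : d^-1 * d = 1 by rewrite mulVf ?gt_eqF.
have E3 : t * (t * (eta0 * d * W)) = omega * omega * eta0 * (d^-1 * W).
  rewrite /t; field; by rewrite gt_eqF.
have E4 : t * W = omega * (d^-1 * W) by rewrite /t mulrA.
have dW : 0 <= d^-1 * W by rewrite mulr_ge0 // invr_ge0 ltW.
have : omega * omega * eta0 * (d^-1 * W) <= (2 * omega - eta) * (d^-1 * W).
  apply: ler_wpM2r => //.
  have E5 : omega * (2 - omega * eta0) = 2 * omega - omega * omega * eta0 by ring.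
  rewrite -subr_ge0.
  have -> : 2 * omega - eta - omega * omega * eta0 = omega * (2 - omega * eta0) - eta by ring.
  by rewrite subr_ge0.
lra.
Qed.

Lemma mnorm_sq p (M : 'M[R]_p) v : 0 <= bf M v v -> mnorm M v ^+ 2 = bf M v v.
Proof. by move=> h; rewrite /mnorm sqr_sqrtr. Qed.

Let P := 2 *: Rm^T.
Let Ac := Rm *m A *m P.
Let T := 1%:M - P *m invmx Ac *m Rm *m A.

Lemma Ac_unit : Ac \in unitmx.
Proof.
rewrite unitmxE unitfE; apply/negP => /det0P [v nzv vAc].
have H1 : v *m Rm *m A *m Rm^T = 0.
  move: vAc; rewrite /Ac /P -!scalemxAr => /eqP; rewrite scalemx_eq0 pnatr_eq0 /= !mulmxA.
  by move/eqP.
pose u := Rm^T *m v^T.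
have Hu : bf A u u = 0.
  by rewrite /bf /u trmx_mul !trmxK !mulmxA H1 mul0mx mxE.
have := Hinj (HApd Hu) => /(congr1 trmx); rewrite trmxK trmx0 => Hv.
by move: nzv; rewrite Hv eqxx.
Qed.

Lemma RAT : Rm *m A *m T = 0.
Proof.
rewrite /T mulmxBr mulmx1 !mulmxA.
have -> : Rm *m A *m P *m invmx Ac = 1%:M by rewrite -/Ac mulmxV // Ac_unit.
by rewrite mul1mx subrr.
Qed.

Lemma PAT (c : 'cV[R]_m) (v : 'cV[R]_n) : bf A (P *m c) (T *m v) = 0.
Proof.
rewrite bf_mull bf_mulr /P linearZ /= trmxK -!scalemxAl RAT scaler0.
exact: bf0M.
Qed.

Lemma Tv (v : 'cV[R]_n) : T *m v = v - P *m (invmx Ac *m Rm *m A *m v).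
Proof. by rewrite /T mulmxBl mul1mx !mulmxA. Qed.

Lemma qfT (v : 'cV[R]_n) : bf A (T *m v) (T *m v) <= bf A v v.
Proof.
set z := invmx Ac *m Rm *m A *m v.
have Ev : v = T *m v + P *m z by rewrite Tv subrK.
rewrite {3 4}Ev bfDl !bfDr PAT (bf_sym (T *m v)) // PAT.
have := HApsd (P *m z); lra.
Qed.

Lemma approxT (v : 'cV[R]_n) :
  bf A (T *m v) (T *m v) <= 4 / d * bf 1%:M (A *m (T *m v)) (A *m (T *m v)).
Proof.
set e := T *m v.
have [c Hc] := Happrox e.
set x := e - P *m c in Hc.
set y := A *m e.
have Ea : bf A e e = bf 1%:M x y.
  by rewrite /y bf_mulr mul1mx /x bfBl PAT subr0.
have H0 := bf1_ge0 ((d / 4) *: x - y).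
rewrite !bfBl !bfBr !bfZl !bfZr (bf_sym y x) ?trmx1 // in H0.
rewrite Ea in Hc *.
set a := bf 1%:M x y in H0 Hc *.
set X := bf 1%:M x x in H0 Hc *.
set Y := bf 1%:M y y in H0 *.
have h1 : 0 <= d / 16 * (4 * a - d * X) by apply: mulr_ge0; [rewrite divr_ge0 // ltW | lra].
have E1 : d / 4 * (d / 4 * X) = d * d / 16 * X by field.
have E2 : d / 16 * (4 * a - d * X) = d / 4 * a - d * d / 16 * X by field.
have h2 : d / 4 * a <= Y.
  have E3 : d / 4 * (d / 4 * X) - d / 4 * a - (d / 4 * a - Y) = d * d / 16 * X - d / 2 * a + Y by field.
  lra.
rewrite mulrAC ler_pdivlMr //.
have E4 : a * d = 4 * (d / 4 * a) by field.
lra.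
Qed.

Lemma twogrid (v : 'cV[R]_n) :
  bf A (K *m (T *m v)) (K *m (T *m v)) <= (1 - eta / 4) * bf A v v.
Proof.
have h1 := part1 (T *m v).
have h2 := approxT v.
have h3 := qfT v.
have he := eta_le1.
set a := bf A (T *m v) (T *m v) in h1 h2 h3 *.
set W := bf 1%:M (A *m (T *m v)) (A *m (T *m v)) in h1 h2 *.
have h4 : a / 4 <= d^-1 * W.
  rewrite ler_pdivrMr //.
  have -> : d^-1 * W * 4 = 4 / d * W by rewrite mulrC mulrA.
  exact: h2.
have h5 : eta * (a / 4) <= eta * (d^-1 * W) by apply: ler_wpM2l => //; exact: ltW.
have h6 : (1 - eta / 4) * a <= (1 - eta / 4) * bf A v v.
  by apply: ler_wpM2l => //; lra.
have E : (1 - eta / 4) * a = a - eta * (a / 4) by field.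
lra.
Qed.

Lemma abstract_main :
  (forall nu : 'cV[R]_n,
      mnorm A (K *m nu) ^+ 2
      <= mnorm A nu ^+ 2 - eta * mnorm (invmx (diagpart A)) (A *m nu) ^+ 2)
  /\ opnorm A (K *m T) <= Num.sqrt (1 - eta / 4)
  /\ Num.sqrt (1 - eta / 4) < 1.
Proof.
have he := eta_le1.
have hs0 : 0 <= 1 - eta / 4 by lra.
split.
  move=> nu; rewrite !mnorm_sq //; last first.
    by rewrite Dinv bf_scalar mulr_ge0 // ?bf1_ge0 // invr_ge0 ltW.
  by rewrite Dinv bf_scalar; exact: part1.
split; last by rewrite -[X in _ < X]sqrtr1 ltr_sqrt //; have := Heta; lra.
rewrite /opnorm; apply: ge_sup.
  pose i0 : 'I_n := Ordinal n0.
  pose v1 : 'cV[R]_n := const_mx 1.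
  have nz : v1 != 0.
    apply/eqP => /matrixP /(_ i0 0); rewrite !mxE => /eqP; by rewrite oner_eq0.
  by exists (mnorm A (K *m T *m v1) / mnorm A v1), v1.
move=> r [v [nz ->]].
rewrite -mulmxA.
have H := twogrid v.
have [a0|ap] := eqVneq (bf A v v) 0.
  by rewrite /mnorm -/(bf A v v) a0 sqrtr0 invr0 mulr0 sqrtr_ge0.
have ap' : 0 < bf A v v by rewrite lt_def ap HApsd.
have sp : 0 < mnorm A v by rewrite /mnorm -/(bf A v v) sqrtr_gt0.
rewrite ler_pdivrMr // /mnorm -/(bf A v v) -/(bf A _ _) -sqrtrM //.
exact: ler_wsqrtr.
Qed.

End Abstract.

Section Ext.
Variable R : realType.
Variable n : nat.

Definition ext (e : 'cV[R]_n) (k : nat) : R := \sum_(i < n) (if i.+1 == k then e i 0 else 0).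

Lemma ext_ord e (i : 'I_n) : ext e i.+1 = e i 0.
Proof.
rewrite /ext (bigD1 i) //= eqxx big1 ?addr0 // => j ne.
by rewrite eqSS ifF //; apply/negbTE.
Qed.

Lemma ext_out e k : ((k == 0) || (n < k))%N -> ext e k = 0.
Proof.
move=> H; rewrite /ext big1 // => i _; rewrite ifF //.
have := ltn_ord i; lia.
Qed.

Lemma sum_ext (G : nat -> R -> R) (e : 'cV[R]_n) :
  \sum_(i < n) G i (e i 0) = \sum_(0 <= k < n) G k (ext e k.+1).
Proof. by rewrite big_mkord; apply: eq_bigr => i _; rewrite ext_ord. Qed.

Lemma sum_pick (mm j : nat) (f : nat -> R) :
  \sum_(i < mm) (if j == i then f i else 0) = if (j < mm)%N then f j else 0.
Proof.
case: ltnP => H.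
  rewrite (bigD1 (Ordinal H)) //= eqxx big1 ?addr0 // => i ne; rewrite ifF //.
  apply/negbTE; apply: contra ne => /eqP E; apply/eqP; apply: val_inj; by rewrite /= E.
rewrite big1 // => i _; rewrite ifF //; have := ltn_ord i; lia.
Qed.

Lemma sum_pick_ord (mm : nat) (k : 'I_mm) (F : 'I_mm -> R) :
  \sum_(i < mm) (if (k : nat) == i then F i else 0) = F k.
Proof.
rewrite (bigD1 k) //= eqxx big1 ?addr0 // => i ne; rewrite ifF //.
by apply/negbTE; rewrite eq_sym.
Qed.
End Ext.

Section Concrete.
Variable R : realType.
Variable q : nat.
Hypothesis q2 : (2 <= q)%N.

Let KK := (2 ^ q.-1)%N.
Lemma hK : (2 ^ q = 2 * KK)%N.
Proof. by rewrite /KK -expnS prednK //; lia. Qed.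
Lemma Kq2 : (2 <= KK)%N.
Proof. rewrite /KK; have -> : q.-1 = q.-2.+1 by lia. by rewrite expnS; have := expn_gt0 2 q.-2; lia. Qed.
Lemma hn : ((2 ^ q - 1).+1 = 2 * KK)%N.
Proof. rewrite hK; have := Kq2; lia. Qed.

Lemma qfB (e : 'cV[R]_(2 ^ q - 1)) :
  let x := ext e in
  let N : R := (2 * KK)%:R in
  let Q1 := \sum_(0 <= k < (2 * KK).+1) x k ^+ 2 in
  let Q2 := \sum_(0 <= k < 2 * KK) x k * x k.+1 in
  let S := \sum_(0 <= k < (2 * KK).+1) x k in
  bf (Bh R q) e e = N / 6 * (4 * Q1 + 2 * Q2) - S ^+ 2.
Proof.
move=> x N Q1 Q2 S.
set n := (2 ^ q - 1)%N.
pose Nr : R := (2 ^ q)%:R.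
have NrN : Nr = N by rewrite /Nr hK.
set Se := \sum_(j < n) e j 0.
rewrite bfE.
have inner : forall i : 'I_n, \sum_(j < n) e i 0 * Bh R q i j * e j 0
   = e i 0 * (Nr / 6 * (4 * x i.+1 + x i.+2 + x i) - Se).
  move=> i.
  have -> : \sum_(j < n) e i 0 * Bh R q i j * e j 0 =
     \sum_(j < n) e i 0 * (Nr / 6 * (4 * (if j.+1 == i.+1 then e j 0 else 0)
        + (if j.+1 == i.+2 then e j 0 else 0) + (if j.+1 == i then e j 0 else 0)) - e j 0).
    apply: eq_bigr => j _; rewrite /Bh mxE -/Nr.
    change (i == j) with ((i : nat) == j).
    case E1: ((i : nat) == j); case E2: (i.+1 == j)%N; case E3: (j.+1 == i)%N;
      case E4: (j.+1 == i.+1)%N; case E5: (j.+1 == i.+2)%N => /=;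
      try (exfalso; lia); field; by [].
  rewrite -mulr_sumr sumrB -mulr_sumr !sumrDx -mulr_sumr.
  by rewrite /x /ext.
rewrite (eq_bigr _ (fun i _ => inner i)).
rewrite (sum_ext (fun k y => y * (Nr / 6 * (4 * x k.+1 + x k.+2 + x k) - Se))).
have HS : Se = \sum_(0 <= k < n) x k.+1 by rewrite /Se (sum_ext (fun _ y => y)).
have x0 : x 0%N = 0 by apply: ext_out.
have xn : x n.+1 = 0 by apply: ext_out; rewrite ltnSn orbT.
have hQ1 : Q1 = \sum_(0 <= k < n) x k.+1 ^+ 2.
  rewrite /Q1 -hn big_nat_recl // big_nat_recr //= x0 xn expr0n /= add0r addr0.
  by [].
have hQ2 : Q2 = \sum_(0 <= k < n) x k.+1 * x k.+2.
  by rewrite /Q2 -hn big_nat_recl //= x0 mul0r add0r.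
have hQ2' : Q2 = \sum_(0 <= k < n) x k * x k.+1.
  by rewrite /Q2 -hn big_nat_recr //= xn mulr0 addr0.
have hS : S = Se.
  by rewrite HS /S -hn big_nat_recl // big_nat_recr //= x0 xn add0r addr0.
have -> : \sum_(0 <= k < n) x k.+1 * (Nr / 6 * (4 * x k.+1 + x k.+2 + x k) - Se)
  = Nr / 6 * 4 * \sum_(0 <= k < n) x k.+1 ^+ 2 + Nr / 6 * \sum_(0 <= k < n) x k.+1 * x k.+2
    + Nr / 6 * \sum_(0 <= k < n) x k * x k.+1 - Se * \sum_(0 <= k < n) x k.+1.
  rewrite !mulr_sumr -!sumrDx -sumrB; apply: eq_bigr => k _; ring.
rewrite -hQ1 -hQ2 -hQ2' -HS hS NrN; ring.
Qed.

Lemma resid_bf (e : 'cV[R]_(2 ^ q - 1)) :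
  let x := ext e in
  let c : 'cV[R]_(2 ^ q.-1 - 1) := \col_(i < 2 ^ q.-1 - 1) x (2 * i).+2 in
  bf 1%:M (e - (2 *: (restr R q)^T) *m c) (e - (2 *: (restr R q)^T) *m c)
  = \sum_(0 <= i < KK) (x (2 * i).+1 - (x (2 * i)%N + x (2 * i).+2) / 2) ^+ 2.
Proof.
move=> x c.
set n := (2 ^ q - 1)%N.
set m := (2 ^ q.-1 - 1)%N.
have hnm : n = (2 * m).+1 by rewrite /n /m; have := hn; have := Kq2; rewrite /KK; lia.
pose resid (j : nat) := if odd j then 0 else x j.+1 - (x j + x j.+2) / 2.
have xn : x n.+1 = 0 by apply: ext_out; rewrite ltnSn orbT.
have x0 : x 0%N = 0 by apply: ext_out.
have entry : forall j : 'I_n, (e - (2 *: (restr R q)^T) *m c) j 0 = resid j.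
  move=> j; rewrite !mxE.
  have ej : e j 0 = x j.+1 by rewrite /x ext_ord.
  have hj := odd_double_half j.
  have jlt2 : (nat_of_ord j < (2 * m).+1)%N by rewrite -hnm; exact: ltn_ord.
  set k := (nat_of_ord j)./2 in hj *.
  rewrite /resid.
  case Hodd: (odd j) in hj *.
    have -> : \sum_(i < m) (2 *: (restr R q)^T) j i * c i 0
              = \sum_(i < m) (if k == i then x (2 * i).+2 else 0).
      apply: eq_bigr => i _; rewrite !mxE.
      case E1: (nat_of_ord j == 2 * i)%N; case E2: (nat_of_ord j == (2 * i).+1)%N;
        case E3: (nat_of_ord j == (2 * i).+2)%N; case E4: (k == i) => /=;
        try (exfalso; lia); field; by [].
    rewrite (sum_pick _ _ (fun i => x (2 * i).+2)) ifT; last by lia.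
    have -> : (2 * k).+2 = (nat_of_ord j).+1 by lia.
    rewrite ej; ring.
  have -> : \sum_(i < m) (2 *: (restr R q)^T) j i * c i 0
            = \sum_(i < m) (if k == i then x (2 * i).+2 / 2 else 0)
              + \sum_(i < m) (if k == i.+1 then x (2 * i).+2 / 2 else 0).
    rewrite -sumrDx; apply: eq_bigr => i _; rewrite !mxE.
    case E1: (nat_of_ord j == 2 * i)%N; case E2: (nat_of_ord j == (2 * i).+1)%N;
      case E3: (nat_of_ord j == (2 * i).+2)%N; case E4: (k == i); case E5: (k == i.+1) => /=;
      try (exfalso; lia); field; by [].
  rewrite (sum_pick _ _ (fun i => x (2 * i).+2 / 2)).
  have H1 : (if (k < m)%N then x (2 * k).+2 / 2 else 0) = x (nat_of_ord j).+2 / 2.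
    case: ifP => Hk; first by congr (x _ / 2); lia.
    have -> : (nat_of_ord j).+2 = n.+1 by lia.
    by rewrite xn mul0r.
  have H2 : \sum_(i < m) (if k == i.+1 then x (2 * i).+2 / 2 else 0) = x (nat_of_ord j) / 2.
    case Ek: k => [|k'].
      rewrite big1; last by move=> i _; rewrite ?ifF //; lia.
      have -> : nat_of_ord j = 0%N by lia.
      by rewrite x0 mul0r.
    have -> : \sum_(i < m) (if k'.+1 == i.+1 then x (2 * i).+2 / 2 else 0)
            = \sum_(i < m) (if k' == i then x (2 * i).+2 / 2 else 0).
      by apply: eq_bigr => i _; rewrite eqSS.
    rewrite (sum_pick _ _ (fun i => x (2 * i).+2 / 2)) ifT; last by lia.
    by congr (x _ / 2); lia.
  rewrite H1 H2 ej; field; by [].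
rewrite bf1E.
have -> : \sum_(i < n) (e - (2 *: (restr R q)^T) *m c) i 0 * (e - (2 *: (restr R q)^T) *m c) i 0
   = \sum_(i < n) resid i ^+ 2 by apply: eq_bigr => i _; rewrite entry expr2.
rewrite -(big_mkord xpredT (fun i => resid i ^+ 2)).
have hn2 : (2 * KK = n.+1)%N by rewrite /n hn.
have -> : \sum_(0 <= i < n) resid i ^+ 2 = \sum_(0 <= i < 2 * KK) resid i ^+ 2.
  have on : odd n = true by rewrite hnm; have := odd_double m; rewrite -mul2n /= => ->.
  by rewrite hn2 big_nat_recr //= /resid on expr0n /= addr0.
rewrite sum_pair; apply: eq_bigr => i _.
have oi : odd (2 * i) = false by lia.
rewrite /resid oddS oi /= expr0n /= addr0; by [].
Qed.

Lemma Aq_sym (b : R) : (Aq q b)^T = Aq q b.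
Proof.
rewrite /Aq linearZ /=; congr (_ *: _); apply/matrixP => i j.
by rewrite /Bh !mxE eq_sym orbC.
Qed.

Lemma key_for (e : 'cV[R]_(2 ^ q - 1)) :
  (2 * (2 * KK)%:R / 3) * \sum_(0 <= i < KK) (ext e (2 * i).+1 - (ext e (2 * i)%N + ext e (2 * i).+2) / 2) ^+ 2
     <= 4 * bf (Bh R q) e e
  /\ forall j, (0 < j < 2 * KK)%N -> (2 * KK)%:R / 12 * ext e j ^+ 2 <= bf (Bh R q) e e.
Proof.
rewrite qfB; apply: key_pure.
- by have := Kq2; lia.
- by apply: ext_out.
- by apply: ext_out; rewrite -hn ltnSn orbT.
Qed.

Lemma Bpsd (e : 'cV[R]_(2 ^ q - 1)) : 0 <= bf (Bh R q) e e.
Proof.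
have [H _] := key_for e.
have : 0 <= 2 * (2 * KK)%:R / 3 * \sum_(0 <= i < KK)
   (ext e (2 * i).+1 - (ext e (2 * i)%N + ext e (2 * i).+2) / 2) ^+ 2.
  apply: mulr_ge0; first by apply: divr_ge0 => //; apply: mulr_ge0.
  by apply: sumr_ge0 => i _; apply: sqr_ge0.
lra.
Qed.

Lemma Bpd (e : 'cV[R]_(2 ^ q - 1)) : bf (Bh R q) e e = 0 -> e = 0.
Proof.
move=> H0; have [_ H] := key_for e.
apply/matrixP => j j0; rewrite (ord1 j0) mxE.
have Hj : (0 < (nat_of_ord j).+1 < 2 * KK)%N by rewrite -hn; have := ltn_ord j; lia.
have := H _ Hj; rewrite H0 ext_ord => h.
have Np : 0 < (2 * KK)%:R / 12 :> R by rewrite divr_gt0 // ltr0n; have := Kq2; lia.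
have : e j 0 ^+ 2 <= 0.
  by rewrite -(ler_pM2l Np) mulr0.
have := sqr_ge0 (e j 0) => h1 h2.
have : e j 0 ^+ 2 = 0 by apply/eqP; rewrite eq_le h2 h1.
by move/eqP; rewrite sqrf_eq0 => /eqP.
Qed.

Lemma Aq_psd (b : R) v : 0 <= bf (Aq q b) v v.
Proof. by rewrite /Aq bfMZ mulr_ge0 ?sqr_ge0 ?Bpsd. Qed.

Lemma Aq_pd (b : R) : 0 < b -> forall v, bf (Aq q b) v v = 0 -> v = 0.
Proof.
move=> hb v; rewrite /Aq bfMZ => /eqP; rewrite mulf_eq0 => /orP [|/eqP]; last exact: Bpd.
rewrite sqrf_eq0 mulf_eq0 invr_eq0 pnatr_eq0 expn_eq0 /= orbF => /eqP b0.
by move: hb; rewrite b0 ltxx.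
Qed.

Let dd (b : R) : R := (b / (2 ^ q)%:R) ^+ 2 * (2 * (2 ^ q)%:R / 3 - 1).

Lemma dd_pos (b : R) : 0 < b -> 0 < dd b.
Proof.
move=> hb; rewrite /dd; apply: mulr_gt0.
  rewrite exprn_gt0 // divr_gt0 // ltr0n expn_gt0 //.
have h4 : (4 <= 2 ^ q)%N by rewrite hK; have := Kq2; lia.
have : (4%:R : R) <= (2 ^ q)%:R by rewrite ler_nat.
lra.
Qed.

Lemma diagAq (b : R) : diagpart (Aq q b) = (dd b)%:M.
Proof.
apply/matrixP => i j; rewrite !mxE.
have [E|ne] := eqVneq i j; last by [].
by rewrite /dd.
Qed.

Lemma approxAq (b : R) (e : 'cV[R]_(2 ^ q - 1)) : 0 < b ->
  exists c : 'cV[R]_(2 ^ q.-1 - 1),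
  dd b * bf 1%:M (e - 2 *: (restr R q)^T *m c) (e - 2 *: (restr R q)^T *m c)
     <= 4 * bf (Aq q b) e e.
Proof.
move=> hb.
exists (\col_(i < 2 ^ q.-1 - 1) ext e (2 * i).+2).
rewrite resid_bf /Aq bfMZ /dd.
have [H _] := key_for e.
set S := \sum_(0 <= i < KK) _ in H *.
have S0 : 0 <= S by apply: sumr_ge0 => i _; apply: sqr_ge0.
rewrite -hK in H.
set h2 := (b / (2 ^ q)%:R) ^+ 2.
have h20 : 0 <= h2 by apply: sqr_ge0.
set NN : R := (2 ^ q)%:R in H *.
have : h2 * ((2 * NN / 3 - 1) * S) <= h2 * (4 * bf (Bh R q) e e).
  apply: ler_wpM2l => //; lra.
have E1 : h2 * (2 * NN / 3 - 1) * S = h2 * ((2 * NN / 3 - 1) * S) by ring.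
have E2 : 4 * (h2 * bf (Bh R q) e e) = h2 * (4 * bf (Bh R q) e e) by ring.
by move=> H1; rewrite E1 E2.
Qed.

Lemma restr_inj (c : 'cV[R]_(2 ^ q.-1 - 1)) : (restr R q)^T *m c = 0 -> c = 0.
Proof.
move=> H; apply/matrixP => k j0; rewrite (ord1 j0) [RHS]mxE.
have hk : ((2 * k).+1 < 2 ^ q - 1)%N.
  have := ltn_ord k; have := hn; have := Kq2; rewrite /KK; lia.
pose jj : 'I_(2 ^ q - 1) := Ordinal hk.
have := congr1 (fun M : 'cV[R]_(2 ^ q - 1) => M jj 0) H; rewrite [RHS]mxE mxE.
have -> : \sum_(i < 2 ^ q.-1 - 1) (restr R q)^T jj i * c i 0
          = \sum_(i < 2 ^ q.-1 - 1) (if (k : nat) == i then c i 0 / 2 else 0).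
  apply: eq_bigr => i _; rewrite !mxE /=.
  case E1: ((2 * k).+1 == 2 * i)%N; case E2: ((2 * k).+1 == (2 * i).+1)%N;
    case E3: ((2 * k).+1 == (2 * i).+2)%N; case E4: ((k : nat) == i) => /=;
    try (exfalso; lia); try (field; by []).
rewrite (sum_pick_ord k (fun i => c i 0 / 2)) => /eqP.
by rewrite mulf_eq0 invr_eq0 pnatr_eq0 orbF => /eqP.
Qed.

Lemma n_pos : (0 < 2 ^ q - 1)%N.
Proof. have := hK; have := Kq2; lia. Qed.

End Concrete.

Theorem theorem4p5 (R : realType) (q : nat) (b eta0 omega eta : R) :
  (2 <= q)%N -> 0 < b ->
  (* lambda_max (D_q^{-1} A_q) <= eta0 : every eigenvalue is <= eta0 *)
  (forall lam : R, eigenvalue (invmx (diagpart (Aq q b)) *m Aq q b) lam -> lam <= eta0) ->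
  eta0 < 3 ->
  0 < omega -> omega < 2 / eta0 ->
  0 < eta -> eta <= omega * (2 - omega * eta0) ->
  (forall nu : 'cV[R]_(2 ^ q - 1),
      mnorm (Aq q b) (Kq q b omega *m nu) ^+ 2
      <= mnorm (Aq q b) nu ^+ 2
         - eta * mnorm (invmx (diagpart (Aq q b))) (Aq q b *m nu) ^+ 2)
  /\ opnorm (Aq q b) (Kq q b omega *m Tq q b) <= Num.sqrt (1 - eta / 4)
  /\ Num.sqrt (1 - eta / 4) < 1.
Proof.
move=> q2 hb Heig h3 hom hom2 heta heta2.
have H := @abstract_main R (2 ^ q - 1) (2 ^ q.-1 - 1) (Aq q b) (restr R q)
  ((b / (2 ^ q)%:R) ^+ 2 * (2 * (2 ^ q)%:R / 3 - 1)) eta0 omega eta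
  (Aq_sym q b) (Aq_psd q2 b) (Aq_pd q2 hb) (dd_pos q2 hb) (diagAq q b)
  (fun e => approxAq q2 e hb) (restr_inj q2) (n_pos q2) Heig hom heta heta2.
rewrite /Kq /Tq /Acoarse /prol.
exact: H.
Qed.
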